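(* For every $n$ with $2\le n\le\infty$, the identity $xysxty \approx yxsxty$ is a finite identity basis for the sylvester monoid $\mathrm{sylv}_n$. Consequently, all sylvester monoids of rank at least $2$ (including rank $\infty$) are equationally equivalent.
   Context: Let $\mathcal{A}=\{1<2<3<\cdots\}$, $\mathcal{A}_n=\{1<\cdots<n\}$, $\mathcal{A}_\infty=\mathcal{A}$. A right strict binary search tree is a labelled rooted binary tree (labels in $\mathcal{A}$) in which each node's label is $\ge$ every label in its left subtree and $<$ every label in its right subtree. Inserting $a$ into such a tree $T$: if $T$ is empty, create a node labelled $a$; otherwise, with root label $x$, recursively insert $a$ into the right subtree if $a>x$ and into the left subtree otherwise. For $w=w_1\cdots w_k\in\mathcal{A}^*$, $\mathrm{P}(w)$ is obtained from the empty tree by inserting $w_k,\dots,w_1$ in this order. The relation $u\equiv v\iff\mathrm{P}(u)=\mathrm{P}(v)$ is a congruence, and $\mathrm{sylv}_n=\mathcal{A}_n^*/{\equiv}$. Identities: $\mathcal{X}$ is a countably infinite alphabet; an identity is $\mathbf{u}\approx\mathbf{v}$ with $\mathbf{u},\mathbf{v}\in\mathcal{X}^*$; a monoid $S$ satisfies it if $\varphi(\mathbf{u})=\varphi(\mathbf{v})$ for all maps $\varphi:\mathcal{X}\to S$ (extended to monoid homomorphisms). $\mathbf{u}\approx\mathbf{v}$ is derived from a set $\Sigma$ if there is a sequence $\mathbf{u}=\mathbf{u}_1,\dots,\mathbf{u}_m=\mathbf{v}$ with $\mathbf{u}_i=\mathbf{a}\varphi(\mathbf{p})\mathbf{b}$,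 $\mathbf{u}_{i+1}=\mathbf{a}\varphi(\mathbf{q})\mathbf{b}$ for some words $\mathbf{a},\mathbf{b}\in\mathcal{X}^*$, a monoid endomorphism $\varphi$ of $\mathcal{X}^*$ (letters may go to the empty word), and $\mathbf{p}\approx\mathbf{q}\in\Sigma$. A finite identity basis for $S$ is a finite set $\Sigma$ of identities satisfied by $S$ from which every identity satisfied by $S$ is derived. Two monoids are equationally equivalent if they satisfy the same identities. *)

(* Defs.v *)
From mathcomp Require Import all_boot.
Set Implicit Arguments. Unset Strict Implicit. Unset Printing Implicit Defensive.

Inductive tree := Leaf | Node of tree & nat & tree.

Fixpoint insert (a : nat) (T : tree) : tree :=
  match T with
  | Leaf => Node Leaf a Leaf
  | Node l x r => if x < a then Node l x (insert a r) else Node (insert a l) x r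
  end.

(* P(w1...wk): insert wk, ..., w1 in this order, starting from the empty tree. *)
Definition Ptree (w : seq nat) : tree := foldr insert Leaf w.

(* Rank: [Some n] is rank n, [None] is rank infinity. *)
Definition rank := option nat.

Definition in_alph (n : rank) (a : nat) : bool :=
  (1 <= a) && (if n is Some k then a <= k else true).

Definition word_in (n : rank) (w : seq nat) : bool := all (in_alph n) w.

(* Variables: the countably infinite alphabet X is nat; words are seq nat.
   An identity is a pair (u, v) standing for u ≈ v. *)
Definition identity := (seq nat * seq nat)%type.

Definition subst (phi : nat -> seq nat) (u : seq nat) : seq nat :=
  flatten (map phi u).

(* sylv_n = A_n^* / ≡ with u ≡ v iff P(u) = P(v).  Every map X -> sylv_n
   lifts to a map X -> A_n^* (choose representatives), and the induced
   homomorphism X^* -> sylv_n is the class of the substituted word. *)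
Definition sylv_satisfies (n : rank) (u v : seq nat) : Prop :=
  forall phi : nat -> seq nat, (forall x, word_in n (phi x)) ->
    Ptree (subst phi u) = Ptree (subst phi v).

Definition der_step (Sigma : seq identity) (w1 w2 : seq nat) : Prop :=
  exists (a b : seq nat) (phi : nat -> seq nat) (p q : seq nat),
    ((p, q) \in Sigma \/ (q, p) \in Sigma) /\
    w1 = a ++ subst phi p ++ b /\ w2 = a ++ subst phi q ++ b.

Inductive derivable (Sigma : seq identity) : seq nat -> seq nat -> Prop :=
  | der_refl u : derivable Sigma u u
  | der_cons u w v : der_step Sigma u w -> derivable Sigma w v ->
      derivable Sigma u v.

Definition sylv_finite_basis (n : rank) (Sigma : seq identity) : Prop :=
  (forall p q, (p, q) \in Sigma -> sylv_satisfies n p q) /\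
  (forall u v, sylv_satisfies n u v -> derivable Sigma u v).

Definition vx := 0. Definition vy := 1. Definition vs := 2. Definition vt := 3.

Definition sylv_identity : identity :=
  ([:: vx; vy; vs; vx; vt; vy], [:: vy; vx; vs; vx; vt; vy]).

Definition rank_ge2 (n : rank) : bool :=
  if n is Some k then 2 <= k else true.

(* Main.v *)
Require Import Defs.
From mathcomp Require Import all_boot zify.
Set Implicit Arguments. Unset Strict Implicit. Unset Printing Implicit Defensive.

Definition cnt (y : nat) (w : seq nat) : nat := count (pred1 y) w.

Lemma cnt_cons y a w : cnt y (a :: w) = (a == y) + cnt y w.
Proof. by []. Qed.

Lemma cnt_cat y w1 w2 : cnt y (w1 ++ w2) = cnt y w1 + cnt y w2.
Proof. exact: count_cat. Qed.

Lemma cnt0 y : cnt y [::] = 0.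
Proof. by []. Qed.

Fixpoint after (x : nat) (w : seq nat) : seq nat :=
  match w with [::] => [::] | a :: w' =>
    if x \in w' then after x w' else if a == x then w' else w end.

Lemma afterN x w : x \notin w -> after x w = w.
Proof.
elim: w => //= a w IH; rewrite in_cons negb_or => /andP [xa xw].
by rewrite (negbTE xw) eq_sym (negbTE xa).
Qed.

Lemma after_catR x w1 w2 : x \in w2 -> after x (w1 ++ w2) = after x w2.
Proof. by move=> xw; elim: w1 => //= a w1 IH; rewrite mem_cat xw orbT. Qed.

Lemma after_catN x w1 w2 : x \notin w2 -> after x (w1 ++ w2) = after x w1 ++ w2.
Proof.
move=> xw; elim: w1 => [|a w1 IH] /=; first by rewrite afterN.
rewrite mem_cat (negbTE xw) orbF; case: ifP => // _.
by case: ifP.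
Qed.

Lemma count_after (y x : nat) (w : seq nat) : cnt y (after x w) <= cnt y w.
Proof.
elim: w => //= a w IH; case: ifP => _; first by apply: leq_trans IH (leq_addl _ _).
case: ifP => _ //=; exact: leq_addl.
Qed.

Definition inv_eq (u v : seq nat) :=
  (forall y : nat, cnt y u = cnt y v) /\
  (forall x y : nat, x != y -> cnt y (after x u) = cnt y (after x v)).

Definition Sig := [:: sylv_identity].

Lemma der_trans u w v : derivable Sig u w -> derivable Sig w v -> derivable Sig u v.
Proof. by elim=> // u1 w1 v1 s _ IH /IH; apply: der_cons. Qed.

Lemma der_one u v : der_step Sig u v -> derivable Sig u v.
Proof. by move=> s; apply: der_cons s (der_refl _ _). Qed.

Lemma der_pre c u v : derivable Sig u v -> derivable Sig (c :: u) (c :: v).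
Proof.
elim=> [u1|u1 w1 v1 [a [b [phi [p [q [pq [e1 e2]]]]]]] _ IH]; first exact: der_refl.
apply: der_cons IH; exists (c :: a), b, phi, p, q; split => //.
by rewrite e1 e2.
Qed.

Lemma split_two (c d : nat) (s : seq nat) : c \in s -> d \in s -> c != d ->
  (exists s1 s3 s4, s = s1 ++ c :: s3 ++ d :: s4) \/
  (exists s1 s3 s4, s = s1 ++ d :: s3 ++ c :: s4).
Proof.
elim: s => //= e s IH; rewrite !in_cons => cs ds cd.
case: (eqVneq c e) => [ce|ce].
  subst e; move: ds; rewrite eq_sym (negbTE cd) /= => /splitPr [s3 s4].
  by left; exists [::], s3, s4.
case: (eqVneq d e) => [de|de].
  subst e; move: cs; rewrite (negbTE ce) /= => /splitPr [s3 s4].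
  by right; exists [::], s3, s4.
move: cs ds; rewrite (negbTE ce) (negbTE de) /= => cs ds.
case: (IH cs ds cd) => [[s1 [s3 [s4 ->]]]|[s1 [s3 [s4 ->]]]].
  by left; exists (e :: s1), s3, s4.
by right; exists (e :: s1), s3, s4.
Qed.

Definition phi4 (a b : nat) (s t : seq nat) (z : nat) : seq nat :=
  if z == 0 then [:: a] else if z == 1 then [:: b] else if z == 2 then s else t.

Lemma swap_step (c d : nat) (s : seq nat) : c \in s -> d \in s ->
  derivable Sig (d :: c :: s) (c :: d :: s).
Proof.
move=> cs ds; case: (eqVneq c d) => [->|cd]; first exact: der_refl.
apply: der_one.
case: (split_two cs ds cd) => [[s1 [s3 [s4 ->]]]|[s1 [s3 [s4 ->]]]].
- exists [::], s4, (phi4 c d s1 s3), sylv_identity.2, sylv_identity.1.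
  split; first by right; rewrite mem_seq1 -surjective_pairing.
  by rewrite /subst /vs /vt /phi4 /= -!catA /= -!catA.
- exists [::], s4, (phi4 d c s1 s3), sylv_identity.1, sylv_identity.2.
  split; first by left; rewrite mem_seq1 -surjective_pairing.
  by rewrite /subst /vs /vt /phi4 /= -!catA /= -!catA.
Qed.

Lemma move_left (c : nat) (v1 v2 : seq nat) : c \in v2 -> {subset v1 <= v2} ->
  derivable Sig (v1 ++ c :: v2) (c :: v1 ++ v2).
Proof.
move=> cv2; elim: v1 => [|d v1 IH] sub /=; first exact: der_refl.
apply: der_trans (der_pre d (IH _)) _.
  by move=> z zv; apply: sub; rewrite in_cons zv orbT.
apply: swap_step; rewrite mem_cat ?cv2 ?orbT //.
by rewrite (sub d) ?orbT // in_cons eqxx.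
Qed.

Lemma count0_nil (v : seq nat) : (forall y, cnt y v = 0) -> v = [::].
Proof. by case: v => // a v /(_ a); rewrite !cnt_cons eqxx. Qed.

Lemma after_consI x a w : x \in w -> after x (a :: w) = after x w.
Proof. by move=> xw /=; rewrite xw. Qed.

Lemma der_sym u v : derivable Sig u v -> derivable Sig v u.
Proof.
elim=> [u1|u1 w1 v1 [a [b [phi [p [q [pq [e1 e2]]]]]]] _ IH]; first exact: der_refl.
apply: der_trans IH (der_one _).
exists a, b, phi, q, p; split => //; by case: pq; [right|left].
Qed.

Lemma first_split (c : nat) v : c \in v -> exists v1 v2, v = v1 ++ c :: v2 /\ c \notin v1.
Proof.
elim: v => //= a v IH; rewrite in_cons; case: (eqVneq c a) => [->|ca] /=.
  by move=> _; exists [::], v.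
move=> /IH [v1 [v2 [-> cv1]]]; exists (a :: v1), v2; split => //.
by rewrite in_cons negb_or ca.
Qed.

Lemma cnt_pos (y : nat) (w : seq nat) : (0 < cnt y w) = (y \in w).
Proof. by rewrite /cnt -has_count has_pred1. Qed.

Lemma main u v : inv_eq u v -> derivable Sig u v.
Proof.
elim: u v => [|c u1 IH] v [hc aft].
  by rewrite (count0_nil (fun y => esym (hc y))); apply: der_refl.
have cv : c \in v by rewrite -cnt_pos -hc /= eqxx.
have [v1 [v2 [ev cv1]]] := first_split cv.
have cv1' : cnt c v1 = 0 by apply/eqP; rewrite -leqn0 leqNgt cnt_pos.
have cntv : forall y : nat, cnt y v = cnt y v1 + ((c == y) + cnt y v2).
  by move=> y; rewrite ev cnt_cat.
have inv_v : forall x : nat, (x \in c :: u1) = (x \in v).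
  by move=> x; rewrite -!cnt_pos hc.
case: (boolP (c \in u1)) => cu1.
- have cv2 : c \in v2.
    rewrite -cnt_pos; move: (hc c) (cntv c); rewrite !cnt_cons eqxx cv1' /=.
    have := cnt_pos c u1; rewrite cu1; lia.
  have sub : {subset v1 <= v2}.
    move=> d dv1; apply/negPn/negP => dv2.
    have dc : d != c by apply: contraNneq cv1 => <-.
    have du1 : d \in u1.
      by move: (inv_v d); rewrite in_cons (negbTE dc) ev mem_cat dv1 /= => ->.
    move: (aft d c dc); rewrite (after_consI _ du1) ev after_catN; last first.
      by rewrite in_cons negb_or dc dv2.
    rewrite cnt_cat /= eqxx.
    move: (count_after c d u1) (hc c) (cntv c); rewrite !cnt_cons eqxx cv1' ev; lia.
  apply: der_trans (der_pre c (IH (v1 ++ v2) _)) _; last first.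
    by rewrite ev; apply: der_sym; apply: move_left.
  split.
    by move=> y; move: (hc y) (cntv y); rewrite /= cnt_cat; lia.
  move=> x y xy.
  case: (eqVneq x c) => [exc|xc]; first subst x.
    move: (aft c y xy); rewrite (after_consI _ cu1) ev.
    rewrite (@after_catR c v1 (c :: v2)) ?in_cons ?eqxx // (after_consI _ cv2).
    by rewrite (@after_catR c v1 v2).
  case: (boolP (x \in u1)) => xu1; last first.
    have xv : x \notin v by rewrite -inv_v in_cons negb_or xc.
    have xv12 : x \notin v1 ++ v2.
      by move: xv; rewrite ev !mem_cat in_cons negb_or !negb_or => /and3P [-> _ ->].
    by rewrite !afterN //; move: (hc y) (cntv y); rewrite /= cnt_cat; lia.
  move: (aft x y xy); rewrite (after_consI _ xu1).
  case: (boolP (x \in v2)) => xv2.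
    by rewrite ev (@after_catR x v1 (c :: v2)) ?in_cons ?xv2 ?orbT // (after_consI _ xv2) (@after_catR x v1 v2).
  rewrite ev after_catN; last by rewrite in_cons negb_or xc.
  rewrite after_catN // !cnt_cat /=.
  case: (eqVneq c y) => [cy|cy] /=; last lia.
  subst y; move: (count_after c x u1) (hc c) (cntv c); rewrite !cnt_cons eqxx cv1' /=; lia.
- have cv2 : c \notin v2.
    rewrite -cnt_pos; move: (hc c) (cntv c); rewrite !cnt_cons eqxx cv1' /=.
    have := cnt_pos c u1; rewrite (negbTE cu1); lia.
  have v10 : v1 = [::].
    case: v1 ev cv1 cv1' cntv => // d v1 ev cv1 cv1' cntv.
    have cd : c != d by move: cv1; rewrite in_cons negb_or => /andP [].
    have e1 : after c (c :: u1) = u1 by rewrite /= (negbTE cu1) eqxx.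
    have e2 : after c v = v2.
      by rewrite ev (@after_catR c (d :: v1) (c :: v2)) ?mem_head //= (negbTE cv2) eqxx.
    move: (aft c d cd) (hc d) (cntv d); rewrite e1 e2 !cnt_cons eqxx (negbTE cd) /=; lia.
  subst v1.
  have ev' : v = c :: v2 by [].
  have e1 : after c (c :: u1) = u1 by rewrite /= (negbTE cu1) eqxx.
  have e2 : after c v = v2 by rewrite ev' /= (negbTE cv2) eqxx.
  rewrite ev'; apply: der_pre; apply: IH; split.
    by move=> y; move: (hc y) (cntv y); rewrite cnt_cons cnt0; lia.
  move=> x y xy; case: (eqVneq x c) => [exc|xc]; first subst x.
    by move: (aft c y xy); rewrite e1 e2 (afterN cu1) (afterN cv2).
  have iv : (x \in u1) = (x \in v2).
    by move: (inv_v x); rewrite ev' !in_cons (negbTE xc).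
  case: (boolP (x \in u1)) => xu1.
    have xv2 : x \in v2 by rewrite -iv.
    by move: (aft x y xy); rewrite ev' (after_consI _ xu1) (after_consI _ xv2).
  have xv2 : x \notin v2 by rewrite -iv.
  by rewrite !afterN //; move: (hc y) (cntv y); rewrite cnt_cons cnt0; lia.
Qed.
Fixpoint sep a b T := match T with Leaf => false | Node l x r =>
  if x < a then sep a b r else if x < b then true else sep a b l end.

Lemma ins_comm a b T : a < b -> sep a b T -> insert a (insert b T) = insert b (insert a T).
Proof.
move=> ab; elim: T => [|l IHl x r IHr] //=.
case xa: (x < a).
  have xb : x < b by apply: ltn_trans ab.
  by move=> /IHr E; rewrite /= ?xa ?xb /= ?xa ?xb E.
case xb: (x < b).
  by move=> _; rewrite /= ?xa ?xb /= ?xa ?xb.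
by move=> /IHl E; rewrite /= ?xa ?xb /= ?xa ?xb E.
Qed.

Lemma sep_ins a b c T : sep a b T -> sep a b (insert c T).
Proof.
elim: T => [|l IHl x r IHr] //=.
case xa: (x < a); case xc: (x < c) => /=; rewrite ?xa //.
- by case: (x < b) => // /IHl.
Qed.

Lemma sep_insa a b T : a < b -> sep a b (insert a T).
Proof.
move=> ab; elim: T => [|l IHl x r IHr] /=; first by rewrite ltnn ab.
case: (ltnP x a) => xa /=; rewrite ?xa //.
by rewrite ltnNge xa /=; case: (x < b).
Qed.

Lemma sep_P a b W : a < b -> a \in W -> sep a b (Ptree W).
Proof.
move=> ab; elim: W => [|c W IH] //=.
rewrite in_cons => /orP [/eqP <-|/IH]; first exact: sep_insa.
exact: sep_ins.
Qed.

Definition good (L : seq nat) T := forall a b, a \in L -> a < b -> sep a b T.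

Lemma good_ins L c T : good L T -> good L (insert c T).
Proof. by move=> g a b aL ab; apply: sep_ins; apply: g. Qed.

Lemma good_fold L X T : good L T -> good L (foldr insert T X).
Proof. by elim: X => //= c X IH /IH; apply: good_ins. Qed.

Lemma comm_good L a b T : good L T -> a \in L -> b \in L ->
  insert a (insert b T) = insert b (insert a T).
Proof.
move=> g aL bL; case: (ltngtP a b) => ab.
- by apply: ins_comm => //; apply: g.
- by symmetry; apply: ins_comm => //; apply: g.
- by rewrite ab.
Qed.

Lemma L1 L X b T : all (mem L) X -> b \in L -> good L T ->
  insert b (foldr insert T X) = foldr insert (insert b T) X.
Proof.
move=> + bL g; elim: X => //= c X IH /andP [cL XL].
rewrite (comm_good (good_fold X g) bL cL).
by rewrite IH.
Qed.

Lemma L2 L X Y T : all (mem L) X -> all (mem L) Y -> good L T ->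
  foldr insert (foldr insert T Y) X = foldr insert (foldr insert T X) Y.
Proof.
move=> XL + g; elim: Y => //= b Y IH /andP [bL YL].
by rewrite -(L1 XL bL (good_fold Y g)) IH.
Qed.

Lemma Ptree_cat s t : Ptree (s ++ t) = foldr insert (Ptree t) s.
Proof. by rewrite /Ptree foldr_cat. Qed.

Lemma sound X Y S T B :
  Ptree (X ++ Y ++ S ++ X ++ T ++ Y ++ B) = Ptree (Y ++ X ++ S ++ X ++ T ++ Y ++ B).
Proof.
set W := S ++ X ++ T ++ Y ++ B.
rewrite (Ptree_cat X) (Ptree_cat Y) (Ptree_cat Y) (Ptree_cat X).
have sub : all (mem (X ++ Y)) (X ++ Y) by apply/allP.
have XL : all (mem (X ++ Y)) X by apply/allP => z zX /=; rewrite mem_cat zX.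
have YL : all (mem (X ++ Y)) Y by apply/allP => z zY /=; rewrite mem_cat zY orbT.
apply: (L2 (L := X ++ Y)) => // a b aL ab; apply: sep_P => //.
rewrite /W !mem_cat; move: aL; rewrite mem_cat => /orP [] ->; by rewrite ?orbT.
Qed.

Lemma subst_cons phi a u : subst phi (a :: u) = phi a ++ subst phi u.
Proof. by []. Qed.

Fixpoint tsize T := match T with Leaf => 0 | Node l _ r => tsize l + tsize r + 1 end.

Lemma tsize_ins a T : tsize (insert a T) = (tsize T).+1.
Proof.
elim: T => [|l IHl x r IHr] //=; case: ifP => _ /=; rewrite ?IHl ?IHr; lia.
Qed.

Lemma tsize_P w : tsize (Ptree w) = size w.
Proof. by elim: w => //= a w IH; rewrite tsize_ins IH. Qed.

Definition phi1 (y : nat) (z : nat) : seq nat := if z == y then [:: 1] else [::].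

Lemma size_subst1 y u : size (subst (phi1 y) u) = cnt y u.
Proof.
elim: u => // a u IH; rewrite subst_cons size_cat IH cnt_cons /phi1.
by case: (a == y).
Qed.

Fixpoint chain k T := if k is k'.+1 then Node (chain k' T) 2 Leaf else T.

Fixpoint spine2 T := match T with Leaf => 0 | Node l a _ => if a == 2 then (spine2 l).+1 else 0 end.

Lemma ins_chain a k T : a <= 2 -> insert a (chain k T) = chain k (insert a T).
Proof. by move=> a2; elim: k => //= k ->; rewrite ltnNge a2. Qed.

Lemma ins2_chain k : insert 2 (chain k Leaf) = chain k.+1 Leaf.
Proof. by elim: k => //= k ->. Qed.

Lemma spine_chain k l r : spine2 (chain k (Node l 1 r)) = k.
Proof. by elim: k => //= k ->. Qed.

Definition phi2 (x y : nat) (z : nat) : seq nat :=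
  if z == x then [:: 1] else if z == y then [:: 2] else [::].

Lemma P_nox x y u : x \notin u -> Ptree (subst (phi2 x y) u) = chain (cnt y u) Leaf.
Proof.
elim: u => // a u IH; rewrite in_cons negb_or => /andP [xa xu].
rewrite subst_cons Ptree_cat IH // cnt_cons /phi2 eq_sym (negbTE xa).
by case: (a == y) => //=; rewrite ins2_chain.
Qed.

Lemma P_x x y u : x \in u ->
  exists l r, Ptree (subst (phi2 x y) u) = chain (cnt y (after x u)) (Node l 1 r).
Proof.
elim: u => // a u IH; rewrite in_cons.
case: (boolP (x \in u)) => xu.
  move=> _; have [l [r E]] := IH xu.
  rewrite subst_cons Ptree_cat E (after_consI _ xu) /phi2.
  case: (a == x); last case: (a == y).
  - by rewrite /= ins_chain //=; eexists; eexists.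
  - by rewrite /= ins_chain //=; eexists; eexists.
  - by exists l, r.
rewrite orbF => /eqP xa; subst a.
rewrite subst_cons Ptree_cat P_nox // /phi2 eqxx /= (negbTE xu) eqxx.
by rewrite ins_chain //; exists Leaf, Leaf.
Qed.

Lemma word_phi1 n y z : rank_ge2 n -> word_in n (phi1 y z).
Proof. by case: n => [k|] /= h; rewrite /phi1; case: (z == y) => //=; rewrite /in_alph /= ?andbT; lia. Qed.

Lemma word_phi2 n x y z : rank_ge2 n -> word_in n (phi2 x y z).
Proof.
case: n => [k|] /= h; rewrite /phi2; case: (z == x); case: (z == y) => //=;
  rewrite /in_alph /= ?andbT; lia.
Qed.

Lemma necessary n u v : rank_ge2 n -> sylv_satisfies n u v -> inv_eq u v.
Proof.
move=> hn sat.
have hc : forall y, cnt y u = cnt y v.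
  move=> y; rewrite -!size_subst1 -!tsize_P.
  by rewrite (sat (phi1 y)) // => z; apply: word_phi1.
split => // x y xy.
case: (boolP (x \in u)) => xu; last first.
  have xv : x \notin v by rewrite -cnt_pos -hc cnt_pos.
  by rewrite !afterN.
have xv : x \in v by rewrite -cnt_pos -hc cnt_pos.
have [l [r E1]] := P_x y xu.
have [l' [r' E2]] := P_x y xv.
have := sat (phi2 x y) (fun z => word_phi2 x y z hn).
by rewrite E1 E2 => /(congr1 spine2); rewrite !spine_chain.
Qed.

Lemma der_sound u v : derivable Sig u v -> forall psi, Ptree (subst psi u) = Ptree (subst psi v).
Proof.
elim=> // u1 w1 v1 [a [b [phi [p [q [pq [e1 e2]]]]]]] _ IH psi.
rewrite -IH e1 e2 /subst !map_cat !flatten_cat -/(subst psi a) -/(subst psi b).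
rewrite !Ptree_cat; congr foldr.
have key : forall p q, (p, q) = sylv_identity ->
  Ptree (flatten (map psi (flatten (map phi p))) ++ subst psi b) =
  Ptree (flatten (map psi (flatten (map phi q))) ++ subst psi b).
  move=> p0 q0 [-> ->].
  rewrite /= cats0 !map_cat !flatten_cat -!catA. exact: (sound (flatten (map psi (phi vx))) (flatten (map psi (phi vy))) (flatten (map psi (phi vs))) (flatten (map psi (phi vt))) (subst psi b)).
rewrite -!Ptree_cat.
rewrite !mem_seq1 in pq; case: pq => /eqP E; first exact: key.
by symmetry; apply: key.
Qed.

Theorem theorem4p6 :
  (forall n : rank, rank_ge2 n -> sylv_finite_basis n [:: sylv_identity]) /\
  (forall n m : rank, rank_ge2 n -> rank_ge2 m ->
     forall u v : seq nat, sylv_satisfies n u v <-> sylv_satisfies m u v).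
Proof.
split.
  move=> n hn; split.
    move=> p q; rewrite mem_seq1 => /eqP [-> ->] phi _.
    have := sound (phi vx) (phi vy) (phi vs) (phi vt) [::].
    by rewrite !cats0 /subst /= !cats0.
  by move=> u v /(necessary hn) /main.
move=> n m hn hm u v; split.
  by move=> /(necessary hn) /main /der_sound h psi _.
by move=> /(necessary hm) /main /der_sound h psi _.
Qed.
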